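(* Let $G$ be a graph and $v$ a vertex of $G$ of degree $d(v)$. Let $k$ and $C$ be positive integers with $k\geq d(v)+2$, and let $\alpha$ and $\beta$ be $k$-colourings of $G$. Suppose that there is a recolouring sequence from $\alpha_{\restriction (G-v)}$ to $\beta_{\restriction (G-v)}$ (in $G-v$) in which the vertices of the neighbourhood $N(v)$ are recoloured at most $C$ times in total. Then this sequence lifts to a recolouring sequence in $G$ from $\alpha$ to $\beta$ in which $v$ is recoloured at most $\lceil \frac{C}{k-d(v)-1}\rceil+1$ times.
   Context: All colourings are proper $k$-colourings (maps $V\to\{1,\dots,k\}$ with adjacent vertices receiving distinct colours). A recolouring sequence is a sequence of colourings in which consecutive colourings differ on exactly one vertex. For a subgraph $H$ of $G$ and a colouring $\sigma$ of $G$, $\sigma_{\restriction H}$ is the restriction of $\sigma$ to $H$. A recolouring sequence $s'$ of $H$ lifts to a recolouring sequence $s$ of $G$ if restricting the colourings of $s$ to $H$ (and deleting consecutive repetitions) yields $s'$, i.e. $s$ performs the recolourings of $s'$ in order, interleaved with recolourings of vertices outside $H$. *)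

(* Defs.v *)
From mathcomp Require Import all_boot.
Set Implicit Arguments. Unset Strict Implicit. Unset Printing Implicit Defensive.

Section Recolouring.
Variables (V : finType) (e : rel V) (k : nat).

Definition sgraph := symmetric e /\ irreflexive e.

Definition degree (v : V) : nat := #|[set x | e v x]|.

Definition proper_col (c : {ffun V -> 'I_k}) : bool :=
  [forall x, forall y, e x y ==> (c x != c y)].

Definition differ_one (c c' : {ffun V -> 'I_k}) : bool :=
  #|[set x | c x != c' x]| == 1.

Definition recol_seq (a b : {ffun V -> 'I_k}) (s : seq {ffun V -> 'I_k}) : bool :=
  [&& all proper_col (a :: s), path differ_one a s & last a s == b].

Definition recol_count (A : {set V}) (a : {ffun V -> 'I_k})
    (s : seq {ffun V -> 'I_k}) : nat :=
  sumn (pairmap (fun c c' : {ffun V -> 'I_k} => #|[set x in A | c x != c' x]|) a s).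

End Recolouring.

Fixpoint rem_rep (A : eqType) (s : seq A) : seq A :=
  match s with
  | x :: ((y :: _) as s') => if x == y then rem_rep s' else x :: rem_rep s'
  | _ => s
  end.

Definition del_vertex (V : finType) (v : V) := {x : V | x != v}.
Definition del_rel (V : finType) (e : rel V) (v : V) : rel (del_vertex v) :=
  fun x y => e (val x) (val y).

Definition restr (V : finType) (v : V) (k : nat) (c : {ffun V -> 'I_k})
  : {ffun del_vertex v -> 'I_k} := [ffun x => c (val x)].

Definition lifts (V : finType) (v : V) (k : nat)
    (a : {ffun V -> 'I_k}) (s : seq {ffun V -> 'I_k})
    (a' : {ffun del_vertex v -> 'I_k}) (s' : seq {ffun del_vertex v -> 'I_k}) :=
  rem_rep (map (@restr V v k) (a :: s)) = a' :: s'.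
Arguments del_rel {V} e v _ _.
Arguments lifts {V} v {k} a s a' s'.

(* Main.v *)
Require Import Defs.
From mathcomp Require Import all_boot.
From mathcomp Require Import zify.
Set Implicit Arguments. Unset Strict Implicit. Unset Printing Implicit Defensive.

Section Basics.
Variables (V : finType) (e : rel V) (v : V) (k : nat).
Local Notation W := (del_vertex v).
Local Notation colW := {ffun W -> 'I_k}.
Local Notation col := {ffun V -> 'I_k}.

Definition ext (y : colW) (c : 'I_k) : col :=
  [ffun p => if insub p is Some q then y q else c].

Lemma restr_ext y c : restr v (ext y c) = y.
Proof. by apply/ffunP => q; rewrite !ffunE valK. Qed.

Lemma ext_v y c : ext y c v = c.
Proof. by rewrite ffunE insubN // negbK. Qed.

Lemma val_imset (P : pred V) :
  val @: [set q : W | P (val q)] = [set p | (p != v) && P p].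
Proof.
apply/setP => p; rewrite inE; apply/imsetP/andP.
  by case=> q; rewrite inE => Pq ->; split => //; exact: (valP q).
case=> pv Pp; exists (Sub p pv : W) => //; by rewrite inE SubK.
Qed.

Lemma card_val (P : pred V) :
  #|[set q : W | P (val q)]| = #|[set p | (p != v) && P p]|.
Proof. by rewrite -val_imset card_imset //; exact: val_inj. Qed.

Lemma diff_card (a b : col) :
  #|[set p | a p != b p]| = (a v != b v) + #|[set q : W | restr v a q != restr v b q]|.
Proof.
rewrite (cardsD1 v) inE; congr (_ + _).
have -> : [set q : W | restr v a q != restr v b q] = [set q : W | a (val q) != b (val q)].
  by apply/setP => q; rewrite !inE !ffunE.
rewrite (card_val (fun p => a p != b p)); by apply: eq_card => p; rewrite !inE andbC.
Qed.

Lemma count1 (a b : col) : #|[set x in [set v] | a x != b x]| = (a v != b v).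
Proof.
case: (boolP (a v != b v)) => h.
  have -> : [set x in [set v] | a x != b x] = [set v].
    by apply/setP => p; rewrite !inE; case: eqP => // ->; rewrite h.
  by rewrite cards1.
have -> : [set x in [set v] | a x != b x] = set0.
  by apply/setP => p; rewrite !inE; case: eqP => // ->; rewrite (negbTE h).
by rewrite cards0.
Qed.

Lemma card1_eq (T : finType) (S : {set T}) p q :
  #|S| == 1 -> p \in S -> q \in S -> p = q.
Proof. by case/cards1P => z ->; rewrite !inE => /eqP -> /eqP ->. Qed.

Hypothesis sg : sgraph e.

Lemma proper_restr (a : col) : proper_col e a -> proper_col (del_rel e v) (restr v a).
Proof.
move=> /forallP pa; apply/forallP => x; apply/forallP => y; apply/implyP => exy.
by rewrite !ffunE; move: (pa (val x)) => /forallP /(_ (val y)) /implyP; apply.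
Qed.

Lemma proper_nb (a : col) u : proper_col e a -> e v u -> a u != a v.
Proof.
move=> /forallP pa evu; move: (pa v) => /forallP /(_ u) /implyP /(_ evu).
by rewrite eq_sym.
Qed.

Lemma proper_ext (y : colW) c : proper_col (del_rel e v) y ->
  (forall u : W, e v (val u) -> y u != c) -> proper_col e (ext y c).
Proof.
case: sg => esym eirr.
move=> /forallP py hc; apply/forallP => p; apply/forallP => q; apply/implyP => epq.
rewrite !ffunE.
case: insubP => [p' pp' vp'|]; case: insubP => [q' pq' vq'|].
- move: (py p') => /forallP /(_ q') /implyP; apply. by rewrite /del_rel vp' vq'.
- rewrite negbK => /eqP qv; subst q; apply: hc; by rewrite esym vp'.
- rewrite negbK => /eqP pv; subst p; rewrite eq_sym; apply: hc; by rewrite vq'.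
- rewrite !negbK => /eqP qv /eqP pv; subst; by rewrite eirr in epq.
Qed.

End Basics.


Section Key.
Variables (V : finType) (e : rel V) (v : V) (k m : nat).
Local Notation W := (del_vertex v).
Local Notation colW := {ffun W -> 'I_k}.
Local Notation col := {ffun V -> 'I_k}.
Definition NA : {set W} := [set x : W | e v (val x)].
Definition N1 (x y : colW) := #|[set u in NA | x u != y u]|.

Fixpoint gf (c : 'I_k) (x : colW) (s : seq colW) : nat :=
  match s with
  | [::] => m.-1
  | y :: s1 => if [exists u in NA, (x u != y u) && (y u == c)] then 0
               else N1 x y + gf c y s1
  end.

Lemma N1_le1 x y : differ_one x y -> N1 x y <= 1.
Proof.
move=> /eqP <-; apply: subset_leq_card; apply/subsetP => u; rewrite !inE.
by case/andP.
Qed.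

Lemma arith1 a b n g : a <= b + n -> minn b m <= g.+1 -> minn a m <= (n + g).+1.
Proof. lia. Qed.

Lemma key (s : seq colW) : forall y : colW, path (@differ_one _ _) y s -> forall S : {set 'I_k}, 0 < #|S| ->
  exists2 c, c \in S & minn #|S| m <= (gf c y s).+1.
Proof.
elim: s => [|z s IH] y /=.
  move=> _ S /card_gt0P [c cS]; exists c => //; lia.
case/andP => dyz pz S S0.
pose Conf := [set c | [exists u in NA, (y u != z u) && (z u == c)]].
have hConf : #|Conf| <= N1 y z.
  have -> : Conf = z @: [set u in NA | y u != z u].
    apply/setP => c; rewrite inE; apply/existsP/imsetP.
      case=> u /andP [uA /andP [yz /eqP <-]]; exists u => //; by rewrite inE uA.
    case=> u; rewrite inE => /andP [uA yz] ->; exists u; by rewrite uA yz eqxx.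
  exact: leq_imset_card.
have h1 := N1_le1 dyz.
have hS : #|S| <= #|S :\: Conf| + N1 y z.
  rewrite cardsD; have : #|S :&: Conf| <= #|Conf| by apply: subset_leq_card; apply: subsetIr.
  have : #|S :&: Conf| <= #|S| by apply: subset_leq_card; apply: subsetIl.
  lia.
case: (posnP #|S :\: Conf|) => hS'.
  case/card_gt0P: S0 => c cS; exists c => //; case: ifP => _; move: hS; rewrite hS' add0n => hS; rewrite geq_min; apply/orP; left; by apply: (leq_trans hS); apply: (leq_trans h1).
case: (IH z pz _ hS') => c; rewrite inE => /andP [cC cS] hc.
exists c => //.
rewrite inE in cC; rewrite (negbTE cC). exact: (arith1 hS hc).
Qed.
End Key.


Lemma rem_rep_cons2 (T : eqType) (x y : T) t :
  rem_rep [:: x, y & t] = if x == y then rem_rep (y :: t) else x :: rem_rep (y :: t).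
Proof. by []. Qed.

Lemma recol_count_cons (V : finType) k (A : {set V}) (a b : {ffun V -> 'I_k}) s :
  recol_count A a (b :: s) = #|[set x in A | a x != b x]| + recol_count A b s.
Proof. by []. Qed.

Lemma arithB cnt m g2 N1 N : 0 < m -> m <= g2.+1 -> 1 <= N1 ->
  cnt * m + g2 <= N + 2 * m - 1 -> (1 + (0 + cnt)) * m + 0 <= N1 + N + 2 * m - 1.
Proof. nia. Qed.

Lemma arithA cnt m g N1 N : 0 < m ->
  cnt * m + g <= N + 2 * m - 1 -> (0 + cnt) * m + (N1 + g) <= N1 + N + 2 * m - 1.
Proof. nia. Qed.

Section Main.
Variables (V : finType) (e : rel V) (v : V) (k m : nat) (beta : {ffun V -> 'I_k}).
Hypothesis sg : sgraph e.
Hypothesis hb : proper_col e beta.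
Hypothesis hm0 : 0 < m.
Hypothesis hmk : m + degree e v + 1 <= k.
Local Notation W := (del_vertex v).
Local Notation colW := {ffun W -> 'I_k}.
Local Notation col := {ffun V -> 'I_k}.

Lemma a_eq (a b : col) : restr v a = restr v b -> a v = b v -> a = b.
Proof.
move=> hr hv; apply/ffunP => p; case: (eqVneq p v) => [->//|pv].
by move: (congr1 (fun f : colW => f (Sub p pv : W)) hr); rewrite !ffunE SubK.
Qed.

Lemma card_self (x : colW) : #|[set q | x q != x q]| = 0.
Proof. by apply/eqP; rewrite cards_eq0; apply/eqP/setP => q; rewrite !inE eqxx. Qed.

Lemma diff_neq (x y : colW) : differ_one x y -> x != y.
Proof. by apply: contraL => /eqP ->; rewrite /differ_one card_self. Qed.

Lemma card_NA : #|NA e v| <= degree e v.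
Proof.
rewrite /NA (card_val v (fun p => e v p)); apply: subset_leq_card.
by apply/subsetP => p; rewrite !inE => /andP [].
Qed.

Lemma main (s' : seq colW) : forall a : col, proper_col e a ->
  all (@proper_col _ (del_rel e v) k) s' -> path (@differ_one _ _) (restr v a) s' ->
  last (restr v a) s' = restr v beta ->
  exists s : seq col, [/\ recol_seq e a beta s,
     rem_rep (map (@restr V v k) (a :: s)) = restr v a :: s' &
     recol_count [set v] a s * m + @gf _ e v _ m (a v) (restr v a) s'
       <= recol_count (NA e v) (restr v a) s' + 2 * m - 1].
Proof.
elim: s' => [|y s'' IH] a pa /=.
  move=> _ _ hl.
  case: (eqVneq (a v) (beta v)) => hv.
    exists [::]; split => //=.
      by rewrite /recol_seq /= pa (a_eq hl hv) eqxx.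
    rewrite /recol_count /=; lia.
  exists [:: beta]; split => //=.
    rewrite /recol_seq /= pa hb /differ_one (diff_card v) hl card_self hv /= eqxx //.
  - by rewrite hl eqxx.
  - rewrite /recol_count /= (count1 v) hv; lia.
case/andP => py ps /andP [dxy pth] hl.
set x := restr v a.
have xy : x != y by apply: diff_neq.
case: (boolP [exists u in NA e v, (x u != y u) && (y u == a v)]) => hconf.
-
  case/existsP: hconf => u0 /andP [u0A /andP [xyu0 yu0]].
  pose S := [set c : 'I_k | (c != a v) && [forall u in NA e v, x u != c]].
  have cS : m <= #|S|.
    have sub : ~: S \subset a v |: (x @: NA e v).
      apply/subsetP => c; rewrite !inE negb_and negbK => /orP [->//|].
      case/forallPn => u; rewrite negb_imply negbK => /andP [uA /eqP <-].
      by apply/orP; right; apply/imsetP; exists u.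
    have h1 := subset_leq_card sub.
    have h2 : #|a v |: (x @: NA e v)| <= 1 + degree e v.
      rewrite cardsU1; apply: leq_add; first by case: (_ \in _).
      exact: leq_trans (leq_imset_card _ _) card_NA.
    have h3 := cardsC S; rewrite card_ord in h3.
    lia.
  have [c' c'S hc'] := @key _ e v k m s'' y pth S (leq_trans hm0 cS).
  have hm' : m <= (@gf _ e v _ m c' y s'').+1.
    by apply: leq_trans hc'; rewrite leq_min cS leqnn.
  move: c'S; rewrite inE => /andP [c'a /forallP c'x].
  pose a1 := ext x c'; pose a2 := ext y c'.
  have pa1 : proper_col e a1.
    apply: (proper_ext sg) => //; first exact: proper_restr.
    by move=> u uA; move: (c'x u) => /implyP; apply; rewrite inE.
  have pa2 : proper_col e a2.
    apply: (proper_ext sg) => // u uA.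
    case: (eqVneq (x u) (y u)) => [<-|xyu].
      by move: (c'x u) => /implyP; apply; rewrite inE.
    have -> : u = u0 by apply: (card1_eq dxy); rewrite inE.
    by rewrite (eqP yu0) eq_sym.
  have [s0 [rs0 rr0 bd0]] := IH a2 pa2 ps (ltac:(by rewrite restr_ext)) (ltac:(by rewrite restr_ext)).
  exists [:: a1, a2 & s0]; split.
  + move: rs0; rewrite /recol_seq /= => /and3P [/andP [_ ->] -> ->].
    rewrite pa pa1 pa2 /differ_one !(diff_card v) !restr_ext !ext_v card_self.
    by rewrite (eq_sym (a v)) c'a eqxx /=; move: dxy; rewrite /differ_one => ->.
  + rewrite !map_cons !restr_ext eqxx rem_rep_cons2 (negbTE xy).
    by move: rr0; rewrite !map_cons !restr_ext => ->.
  + rewrite !recol_count_cons !(count1 v) !ext_v (eq_sym (a v)) c'a eqxx /=.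
    move: bd0; rewrite restr_ext ext_v => bd0.
    apply: (arithB hm0 hm') => //.
    by rewrite /N1 card_gt0; apply/set0Pn; exists u0; rewrite inE u0A.
-
  pose a' := ext y (a v).
  have pa' : proper_col e a'.
    apply: (proper_ext sg) => // u uA.
    case: (eqVneq (x u) (y u)) => [<-|xyu].
      by rewrite /x ffunE; exact: (proper_nb pa uA).
    move/existsPn: hconf => /(_ u); rewrite negb_and inE uA xyu /=.
    by [].
  have [s0 [rs0 rr0 bd0]] := IH a' pa' ps (ltac:(by rewrite restr_ext)) (ltac:(by rewrite restr_ext)).
  exists (a' :: s0); split.
  + move: rs0; rewrite /recol_seq /= => /and3P [/andP [_ ->] -> ->].
    rewrite pa pa' /differ_one !(diff_card v) !restr_ext !ext_v eqxx /=.
    by move: dxy; rewrite /differ_one => ->.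
  + rewrite !map_cons !restr_ext (negbTE xy).
    by move: rr0; rewrite !map_cons !restr_ext => ->.
  + rewrite !recol_count_cons !(count1 v) !ext_v eqxx /=.
    move: bd0; rewrite restr_ext ext_v => bd0.
    exact: (arithA _ hm0).
Qed.
End Main.

Unset Implicit Arguments.

Lemma arithF cnt m g N C : 0 < m -> cnt * m + g <= N + 2 * m - 1 -> N <= C ->
  cnt <= (C + m.-1) %/ m + 1.
Proof.
move=> m0 h1 h2; case: cnt h1 => [|c] h1; first by [].
rewrite addn1 ltnS leq_divRL //; nia.
Qed.

Theorem lemma1 (V : finType) (e : rel V) (v : V) (k C : nat)
  (alpha beta : {ffun V -> 'I_k}) (s' : seq {ffun del_vertex v -> 'I_k}) :
  sgraph e ->
  0 < k -> 0 < C ->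
  degree e v + 2 <= k ->
  proper_col e alpha -> proper_col e beta ->
  recol_seq (del_rel e v) (restr v alpha) (restr v beta) s' ->
  recol_count [set x : del_vertex v | e v (val x)] (restr v alpha) s' <= C ->
  exists s : seq {ffun V -> 'I_k},
    [/\ recol_seq e alpha beta s,
        lifts v alpha s (restr v alpha) s' &
        recol_count [set v] alpha s
          <= (C + (k - degree e v - 1).-1) %/ (k - degree e v - 1) + 1].
Proof.
move=> sg k0 C0 hk pa pb /and3P [/andP [_ ps] pth /eqP hl] hC.
have hm0 : 0 < k - degree e v - 1 by lia.
have hmk : (k - degree e v - 1) + degree e v + 1 <= k by lia.
have [s [rs rr bd]] := @main _ e v k _ beta sg pb hm0 hmk s' alpha pa ps pth hl.
exists s; split => //.
have hC' : recol_count (NA e v) (restr v alpha) s' <= C := hC.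
exact: (@arithF _ _ _ _ _ hm0 bd hC').
Qed.
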